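(* Let $G$ be a finite group and let $p$ be a prime. Then $G$ does not have a redundant Sylow $p$-subgroup if and only if there exists a $p$-element $x\in G$ that belongs to a unique Sylow $p$-subgroup of $G$.
   Context: For a finite group $G$ and a prime $p$, $G_p$ denotes the set of $p$-elements of $G$ and $\mathrm{Syl}_p(G)$ the set of Sylow $p$-subgroups of $G$. $G$ is said to have a redundant Sylow $p$-subgroup if $G_p$ is contained in the union of the members of some proper subset of $\mathrm{Syl}_p(G)$. *)

(* Defs.v *)
From mathcomp Require Import all_boot all_fingroup all_solvable.
Set Implicit Arguments. Unset Strict Implicit. Unset Printing Implicit Defensive.
Local Open Scope group_scope.

Definition p_elts (gT : finGroupType) (p : nat) (G : {set gT}) : {set gT} :=
  [set x in G | p.-elt x].

Definition has_redundant_Sylow (gT : finGroupType) (p : nat) (G : {set gT}) : Prop :=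
  exists S : {set {group gT}},
    S \proper 'Syl_p(G) /\ p_elts p G \subset \bigcup_(P in S) P.

(* Main.v *)
Require Import Defs.
From mathcomp Require Import all_boot all_fingroup all_solvable.
Local Open Scope group_scope.

Lemma elt_in_syl {gT : finGroupType} {G : {group gT}} {p : nat} {x} :
  x \in p_elts p G -> exists2 P : {group gT}, P \in 'Syl_p(G) & x \in P.
Proof.
rewrite inE => /andP [xG px].
have sG : <[x]> \subset G by rewrite cycle_subG.
case: (Sylow_superset sG px) => P sP xP.
exists P; first by rewrite inE.
by rewrite -cycle_subG.
Qed.

Theorem lemma2p1 (gT : finGroupType) (G : {group gT}) (p : nat) (hp : prime p) :
  ~ has_redundant_Sylow p G <->
  exists2 x, x \in p_elts p G & #|[set P : {group gT} in 'Syl_p(G) | x \in P]| = 1%N.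
Proof.
split.
- move=> nR.
  case: (boolP [exists x in p_elts p G,
     #|[set P : {group gT} in 'Syl_p(G) | x \in P]| == 1%N]).
    by move=> /exists_inP [x xG /eqP h]; exists x.
  move=> /exists_inP hn; exfalso; apply: nR.
  have [P0 sP0 _] : exists2 P : {group gT}, P \in 'Syl_p(G) & 1 \in P.
    by apply: elt_in_syl; rewrite inE group1 p_elt1.
  exists ('Syl_p(G) :\ P0); split.
    by rewrite properD1.
  apply/subsetP => x xGp.
  case: (elt_in_syl xGp) => Q sQ xQ.
  have : 1 < #|[set P : {group gT} in 'Syl_p(G) | x \in P]|.
    rewrite ltn_neqAle eq_sym.
    have -> : (#|[set P : {group gT} in 'Syl_p(G) | x \in P]| != 1%N).
      by apply/negP => h; apply: hn; exists x.
    by rewrite card_gt0; apply/set0Pn; exists Q; rewrite inE sQ xQ.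
  case/card_gt1P => R1 [R2 [R1in R2in ne12]].
  rewrite !inE in R1in R2in.
  case/andP: R1in => s1 x1; case/andP: R2in => s2 x2.
  case: (eqVneq R1 P0) => [e1|n1].
    apply/bigcupP; exists R2 => //.
    by rewrite !inE s2 andbT -e1 eq_sym.
  by apply/bigcupP; exists R1 => //; rewrite !inE s1 n1.
- case=> x xGp /eqP /cards1P [P0 hP0] [S [pS cov]].
  have P0in : P0 \in [set P : {group gT} in 'Syl_p(G) | x \in P] by rewrite hP0 set11.
  rewrite inE in P0in; case/andP: P0in => sP0 xP0.
  move: (pS); rewrite properEneq => /andP [neS sS].
  case/negP: neS; rewrite eqEsubset sS /=.
  apply/subsetP => Q sQ.
  have sP0' := sP0; have sQ' := sQ.
  rewrite inE in sP0'; rewrite inE in sQ'.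
  case: (Sylow_trans sP0' sQ') => g gG eQ.
  have xgp : x ^ g \in p_elts p G.
    move: xGp; rewrite !inE => /andP [xG px].
    by rewrite groupJ // p_eltJ px.
  move/subsetP: cov => /(_ _ xgp) /bigcupP [R RS xgR].
  have sR : R \in 'Syl_p(G) by apply: (subsetP sS).
  have : (R :^ g^-1)%G \in [set P : {group gT} in 'Syl_p(G) | x \in P].
    rewrite !inE /= -(memJ_conjg _ g) conjsgKV xgR andbT.
    rewrite inE in sR.
    by rewrite pHallJ // groupV.
  rewrite hP0 inE => /eqP eR.
  have -> : Q = R.
    apply: val_inj => /=; rewrite eQ.
    by rewrite -eR /= conjsgKV.
  done.
Qed.
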